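(* Let $T>0$, let $f,h,g:[0,T]\to\mathbb{R}$ be continuous with $g$ not identically zero, and let $\mathbf{m},x_0,x_T\in\mathbb{R}^d$. For a control $\mathbf{u}:[0,T]\to\mathbb{R}^d$ let $\mathbf{x}^u$ solve $\frac{d\mathbf{x}_t}{dt}=f_t\mathbf{x}_t+h_t\mathbf{m}+g_t\mathbf{u}_t$, $\mathbf{x}^u_0=x_0$, and for $\gamma\in(0,\infty)$ let $$\mathcal{J}(\mathbf{u},\gamma)=\int_0^T\tfrac12\|\mathbf{u}_t\|_2^2\,dt+\tfrac\gamma2\|\mathbf{x}^u_T-x_T\|_2^2 .$$ Let $\mathbf{u}^*_{\cdot,\gamma}$ be the optimal control minimizing $\mathcal{J}(\cdot,\gamma)$, and let $\mathbf{u}^*_{t,\infty}=\lim_{\gamma\to\infty}\mathbf{u}^*_{t,\gamma}$ (for each $t$), and define $$\mathcal{J}(\mathbf{u}^*_{\cdot,\infty},\infty)=\int_0^T\tfrac12\|\mathbf{u}^*_{t,\infty}\|_2^2\,dt+\lim_{\gamma\to\infty}\tfrac\gamma2\|\mathbf{x}^{u^*_{\gamma}}_T-x_T\|_2^2 .$$ Then for every $\gamma\in(0,\infty)$, $$\mathcal{J}(\mathbf{u}^*_{\cdot,\gamma},\gamma)\le\mathcal{J}(\mathbf{u}^*_{\cdot,\infty},\infty).$$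
   Context: Notation: $\bar f_t=\int_0^t f_z\,dz$, $\bar h_T=\int_0^T e^{-\bar f_z}h_z\,dz$, $\bar g^2_T=\int_0^T e^{-2\bar f_z}g_z^2\,dz$, $a=e^{\bar f_T}x_0+\mathbf{m}e^{\bar f_T}\bar h_T-x_T$. Explicitly the optimal control is $\mathbf{u}^*_{t,\gamma}=-g_te^{\bar f_T-\bar f_t}\,a/(\gamma^{-1}+e^{2\bar f_T}\bar g^2_T)$, so $\mathbf{u}^*_{t,\infty}=-g_te^{\bar f_T-\bar f_t}\,a/(e^{2\bar f_T}\bar g^2_T)$, which steers $x_0$ exactly to $x_T$; the limit term in $\mathcal{J}(\mathbf{u}^*_{\cdot,\infty},\infty)$ equals $0$. *)

(* Defs.v *)
From HB Require Import structures.
From mathcomp Require Import all_boot all_order all_algebra.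
From mathcomp Require Import all_classical all_reals all_analysis.
Set Implicit Arguments. Unset Strict Implicit. Unset Printing Implicit Defensive.
Import Order.TTheory GRing.Theory Num.Theory.
Import numFieldNormedType.Exports.
Local Open Scope classical_set_scope.
Local Open Scope ring_scope.

Section Defs.
Context {R : realType} {d : nat}.

Definition sqnorm (v : 'I_d -> R) : R := \sum_(i < d) v i ^+ 2.

Definition admissible (T : R) (u : R -> 'I_d -> R) : Prop :=
  forall i, {within `[0, T], continuous (fun t => u t i)}.

Definition solves (T : R) (f h g : R -> R) (m x0 : 'I_d -> R)
    (u x : R -> 'I_d -> R) : Prop :=
  x 0 = x0 /\
  forall i, {within `[0, T], continuous (fun t => x t i)} /\
    forall t, t \in `]0, T[ ->
      is_derive t 1 (fun s => x s i) (f t * x t i + h t * m i + g t * u t i).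

Definition Jcost (T gam : R) (xT : 'I_d -> R) (u x : R -> 'I_d -> R) : \bar R :=
  (\int[lebesgue_measure]_(t in [set` `[0, T]%R]) (2^-1 * sqnorm (u t))%:E
    + (gam / 2 * sqnorm (fun i => x T i - xT i))%:E)%E.

Definition optimal (T gam : R) (f h g : R -> R) (m x0 xT : 'I_d -> R)
    (u x : R -> 'I_d -> R) : Prop :=
  admissible T u /\ solves T f h g m x0 u x /\
  forall v y, admissible T v -> solves T f h g m x0 v y ->
    (Jcost T gam xT u x <= Jcost T gam xT v y)%E.

End Defs.

(* Main.v *)
Require Import Defs.
From HB Require Import structures.
From mathcomp Require Import all_boot all_order all_algebra.
From mathcomp Require Import all_classical all_reals all_analysis.
From mathcomp Require Import ring lra.
Set Implicit Arguments. Unset Strict Implicit. Unset Printing Implicit Defensive.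
Import Order.TTheory GRing.Theory Num.Theory.
Import numFieldNormedType.Exports.
Local Open Scope classical_set_scope.
Local Open Scope ring_scope.

Section Helpers.
Context {R : realType}.

Lemma cvg_bigsum {T : Type} (F : set_system T) {FF : Filter F} (I : Type)
  (r : seq I) (f : I -> T -> R) (a : I -> R) :
  (forall i, f i x @[x --> F] --> a i) ->
  (\sum_(i <- r) f i x) @[x --> F] --> \sum_(i <- r) a i.
Proof.
move=> H; elim: r => [|i r IH].
  under eq_fun do rewrite big_nil; rewrite big_nil; exact: cvg_cst.
under eq_fun do rewrite big_cons; rewrite big_cons; exact: cvgD.
Qed.

Lemma wcM (A : set R) (a b : R -> R) : {within A, continuous a} ->
  {within A, continuous b} -> {within A, continuous (fun t => a t * b t)}.
Proof. by move=> ha hb x; apply: continuousM; [exact: ha|exact: hb]. Qed.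

Lemma wcD (A : set R) (a b : R -> R) : {within A, continuous a} ->
  {within A, continuous b} -> {within A, continuous (fun t => a t + b t)}.
Proof. by move=> ha hb x; apply: continuousD; [exact: ha|exact: hb]. Qed.

Lemma wcc (A : set R) (c : R) : {within A, continuous (fun _ : R => c)}.
Proof. by move=> x; apply: cvg_cst. Qed.

Lemma wcN (A : set R) (a : R -> R) : {within A, continuous a} ->
  {within A, continuous (fun t => - a t)}.
Proof. by move=> ha x; apply: continuousN; exact: ha. Qed.

Lemma wcexp (A : set R) (a : R -> R) : {within A, continuous a} ->
  {within A, continuous (fun t => expR (a t))}.
Proof.
move=> ha x; exact: (@continuous_comp (subspace A) R R a expR x (ha x) (@continuous_expR R (a x))).
Qed.

Lemma wcsum (A : set R) (I : Type) (r : seq I) (a : I -> R -> R) :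
  (forall i, {within A, continuous (a i)}) ->
  {within A, continuous (fun t => \sum_(i <- r) a i t)}.
Proof. move=> ha x; apply: cvg_bigsum => i; exact: ha. Qed.

End Helpers.
Section Integ.
Context {R : realType}.
Notation mu := (@lebesgue_measure R).

Lemma wc_int (a b : R) (h : R -> R) : {within `[a, b], continuous h} ->
  mu.-integrable `[a, b] (EFin \o h).
Proof. move=> H; apply: continuous_compact_integrable => //; exact: segment_compact. Qed.

Lemma int_Rint (a b : R) (h : R -> R) : {within `[a, b], continuous h} ->
  (\int[mu]_(x in `[a, b]) (h x)%:E)%E = (\int[mu]_(x in `[a, b]) h x)%:E.
Proof.
move=> H; rewrite /Rintegral fineK //; apply: integrable_fin_num => //.
exact: wc_int.
Qed.

Lemma Rint_sum (a b : R) (I : Type) (r : seq I) (h : I -> R -> R) :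
  (forall i, {within `[a, b], continuous (h i)}) ->
  \int[mu]_(x in `[a, b]) (\sum_(i <- r) h i x) =
  \sum_(i <- r) \int[mu]_(x in `[a, b]) h i x.
Proof.
move=> H; elim: r => [|i r IH].
  under eq_Rintegral do rewrite big_nil.
  by rewrite big_nil Rintegral_cst // mul0r.
under eq_Rintegral do rewrite big_cons.
rewrite big_cons RintegralD //; first by rewrite IH.
  exact: wc_int.
by apply: wc_int; apply: wcsum.
Qed.

Lemma ZL (T : R) (h : R -> R) : 0 < T -> {within `[0, T], continuous h} ->
  (forall t, t \in `[0, T] -> 0 <= h t) ->
  \int[mu]_(x in `[0, T]) h x = 0 ->
  forall t, t \in `[0, T] -> h t = 0.
Proof.
move=> T0 hc h0 hI t0 t0I.
apply/eqP; rewrite eq_le h0 // andbT; rewrite leNgt; apply/negP => ht0.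
set c := h t0 / 2.
have c0 : 0 < c by rewrite divr_gt0.
have := hc t0; rewrite /continuous_at.
move=> /cvgrPdist_lt /(_ c c0).
move=> H.
have H2 : within `[0, T] (nbhs t0) [set t | `|h t0 - h t| < c].
  rewrite nbhs_subspace_in; [exact: H | by rewrite inE in t0I].
move: H2 => /nbhs_ballP [e /= e0 He].
set a := Num.max 0 (t0 - e / 2).
set b := Num.min T (t0 + e / 2).
have t0T : 0 <= t0 <= T by move: t0I; rewrite in_itv.
case/andP: t0T => t00 t0T.
have e20 : 0 < e / 2 by rewrite divr_gt0.
have ab : a < b.
  rewrite /a /b lt_min !gt_max T0 /=.
  by apply/and3P; split; lra.
have cE : c = h t0 / 2 by [].
have sub : forall y, y \in `[a, b] -> y \in `[0, T] /\ c < h y.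
  move=> y; rewrite !in_itv /= => /andP[ay yb].
  move: ay; rewrite ge_max => /andP[y0 ay].
  move: yb; rewrite le_min => /andP[yT yb].
  have yI : y \in `[0, T] by rewrite in_itv /= y0 yT.
  split => //.
  have yb' : ball t0 e y.
    rewrite /ball /= ltr_norml; apply/andP; split; lra.
  have := He y yb' yI; rewrite ltr_norml => /andP[_ H1].
  lra.
have subab : `[a, b] `<=` `[0, T].
  by move=> y /= yab; by have [] := sub y yab.
have mI := measurable_int mu (wc_int hc).
have : (\int[mu]_(x in [set` `[a, b]%R]) (c%:E) <= \int[mu]_(x in [set` `[0, T]%R]) (h x)%:E)%E.
  apply: (le_trans _ (ge0_subset_integral mu _ _ mI _ subab)) => //.
  apply: (ge0_le_integral mu) => //.
  - by move=> y _; rewrite lee_fin ltW.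
  - exact: measurable_funS mI.
  - by move=> y /= yab; rewrite lee_fin ltW //; have [] := sub y yab.
rewrite (int_Rint hc) hI (int_Rint (@wcc _ `[a, b] c)) Rintegral_cst //.
have mab : fine (mu `[a, b]) = b - a.
  by rewrite (@lebesgue_measure_itv R `[a, b]) /= lte_fin ab -EFinD.
rewrite mab lee_fin.
have : 0 < c * (b - a) by rewrite mulr_gt0 // subr_gt0.
lra.
Qed.
End Integ.
Section Constr.
Context {R : realType}.
Notation mu := (@lebesgue_measure R).

Definition Fi (f : R -> R) (t : R) : R := \int[mu]_(s in `[0, t]) f s.

Lemma Fi_wc (T : R) (f : R -> R) : 0 <= T -> {within `[0, T], continuous f} ->
  {within `[0, T], continuous (Fi f)}.
Proof. move=> T0 hf; exact: (parameterized_integral_continuous T0 (wc_int hf)). Qed.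

Lemma Fi_der (T : R) (f : R -> R) (t : R) : 0 < t -> t < T ->
  {within `[0, T], continuous f} -> is_derive t 1 (Fi f) (f t).
Proof.
move=> t0 tT hf.
have tI : t \in `]0, T[ by rewrite in_itv /= t0 tT.
have := continuous_FTC1_closed tT (wc_int hf) t0
  (within_continuous_continuous (lt_trans t0 tT) hf tI).
move=> [d1 d2].
have -> : f t = 'D_1 (Fi f) t by rewrite -d2 derive1E.
exact: derivableP.
Qed.

Lemma Fi0 (f : R -> R) : Fi f 0 = 0.
Proof. by rewrite /Fi set_itv1 Rintegral_set1. Qed.

Definition kc (f g : R -> R) (w : R -> R) (s : R) : R :=
  expR (- Fi f s) * g s * w s.

Definition zc {d : nat} (f g : R -> R) (w : R -> 'I_d -> R) (t : R) (i : 'I_d) : R :=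
  expR (Fi f t) * Fi (kc f g (fun s => w s i)) t.

Lemma kc_wc (T : R) (f g w : R -> R) : 0 <= T -> {within `[0, T], continuous f} ->
  {within `[0, T], continuous g} -> {within `[0, T], continuous w} ->
  {within `[0, T], continuous (kc f g w)}.
Proof.
move=> T0 hf hg hw; apply: wcM => //; apply: wcM => //.
by apply: wcexp; apply: wcN; apply: Fi_wc.
Qed.

Lemma construct {d : nat} (T : R) (f g : R -> R) (w : R -> 'I_d -> R) :
  0 < T -> {within `[0, T], continuous f} -> {within `[0, T], continuous g} ->
  (forall i, {within `[0, T], continuous (fun t => w t i)}) ->
  [/\ (forall i, zc f g w 0 i = 0),
      (forall i, {within `[0, T], continuous (fun t => zc f g w t i)}),
      (forall i t, t \in `]0, T[ -> is_derive t 1 (fun s => zc f g w s i)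
                      (f t * zc f g w t i + g t * w t i)) &
      (forall i, zc f g w T i =
         \int[mu]_(s in `[0, T]) (expR (Fi f T - Fi f s) * g s * w s i))].
Proof.
move=> T0 hf hg hw.
have T0' := ltW T0.
have hk i := kc_wc T0' hf hg (hw i).
split.
- by move=> i; rewrite /zc !Fi0 mulr0.
- move=> i; apply: wcM; first by apply: wcexp; apply: Fi_wc.
  exact: Fi_wc.
- move=> i t; rewrite in_itv /= => /andP[t0 tT].
  have d1 := is_derive1_comp (is_derive_expR (Fi f t)) (Fi_der t0 tT hf).
  have d2 := Fi_der t0 tT (hk i).
  have H := is_deriveM d1 d2.
  have -> : (fun s => zc f g w s i) = ((expR \o Fi f) * Fi (kc f g (fun s => w s i)))%R.
    by apply/funext => s.
  apply: is_derive_eq.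
  rewrite /GRing.scale /= /kc /zc.
  have E := expRxMexpNx_1 (Fi f t).
  rewrite /kc.
  have -> : expR (Fi f t) * (expR (- Fi f t) * g t * w t i) = g t * w t i.
    by rewrite !mulrA E mul1r.
  ring.
- move=> i; rewrite /zc /Fi -RintegralZl //; last exact: wc_int.
  apply: eq_Rintegral => s _; rewrite /kc expRD !mulrA.
  done.
Qed.
End Constr.
Section FOC.
Context {R : realType} {d : nat}.
Notation mu := (@lebesgue_measure R).

Lemma wc_sqnorm (T : R) (u : R -> 'I_d -> R) :
  (forall i, {within `[0, T], continuous (fun t => u t i)}) ->
  {within `[0, T], continuous (fun t => sqnorm (u t))}.
Proof. by move=> hu; apply: wcsum => i; apply: wcM. Qed.

Lemma sq_exp (a b : 'I_d -> R) (e : R) :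
  sqnorm (fun i => a i + e * b i) =
  sqnorm a + (2 * e) * (\sum_(i < d) a i * b i) + e ^+ 2 * sqnorm b.
Proof.
rewrite /sqnorm !mulr_sumr -!big_split /=; apply: eq_bigr => i _; ring.
Qed.

Lemma quad0 (P Q : R) : (forall e : R, 0 <= e * P + e ^+ 2 * Q) -> P = 0.
Proof.
move=> H; set k := `|Q| + 1.
have k0 : 0 < k by rewrite /k ltr_pwDr // normr_ge0.
have Qk : Q - k < 0 by rewrite /k; have := ler_norm Q; lra.
have H1 := H (- P / k).
have E : (- P / k) * P + (- P / k) ^+ 2 * Q = (P ^+ 2 / k ^+ 2) * (Q - k).
  by field; rewrite gt_eqF.
rewrite E in H1.
have s0 : 0 <= P ^+ 2 / k ^+ 2 by rewrite divr_ge0 // sqr_ge0.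
have s00 : P ^+ 2 / k ^+ 2 = 0 by nra.
move: s00 => /eqP; rewrite mulf_eq0 invr_eq0 !expf_eq0 /= (gt_eqF k0) orbF.
by move/eqP.
Qed.

Lemma Jreal (T gam : R) (xT : 'I_d -> R) (u x : R -> 'I_d -> R) :
  admissible T u ->
  Jcost T gam xT u x = ((\int[mu]_(t in `[0, T]) (2^-1 * sqnorm (u t))) +
                        gam / 2 * sqnorm (fun i => x T i - xT i))%:E.
Proof.
move=> hu; rewrite /Jcost int_Rint ?EFinD //.
by apply: wcM; [exact: wcc | exact: wc_sqnorm].
Qed.

Lemma foc (T gam : R) (f h g : R -> R) (m x0 xT : 'I_d -> R)
    (u x w z : R -> 'I_d -> R) :
  0 < T -> optimal T gam f h g m x0 xT u x -> admissible T w ->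
  (forall i, z 0 i = 0) ->
  (forall i, {within `[0, T], continuous (fun t => z t i)}) ->
  (forall i t, t \in `]0, T[ -> is_derive t 1 (fun s => z s i)
                      (f t * z t i + g t * w t i)) ->
  \int[mu]_(t in `[0, T]) (\sum_(i < d) u t i * w t i) +
    gam * \sum_(i < d) (x T i - xT i) * z T i = 0.
Proof.
move=> T0 [hu [[hx0 hx] Hopt]] hw z0 zc zd.
apply: (@quad0 _ (\int[mu]_(t in `[0, T]) (2^-1 * sqnorm (w t)) +
                   gam / 2 * sqnorm (z T))) => eps.
set v := fun t i => u t i + eps * w t i.
set y := fun t i => x t i + eps * z t i.
have hv : admissible T v.
  by move=> i; apply: wcD; [exact: hu | apply: wcM; [exact: wcc | exact: hw]].
have sy : solves T f h g m x0 v y.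
  split.
    by apply/funext => i; rewrite /y z0 mulr0 addr0 hx0.
  move=> i; have [xc xd] := hx i; split.
    by apply: wcD => //; apply: wcM; [exact: wcc | exact: zc].
  move=> t tI.
  have D := is_deriveD (xd t tI) (is_deriveZ eps (zd i t tI)).
  have -> : (fun s => y s i) = ((fun s => x s i) + eps \*: (fun s => z s i))%R.
    by apply/funext.
  by apply: is_derive_eq; rewrite /v /y /GRing.scale /=; ring.
have := Hopt v y hv sy.
rewrite !Jreal // lee_fin.
have pw : forall t, 2^-1 * sqnorm (v t) = 2^-1 * sqnorm (u t) +
    (eps * (\sum_(i < d) u t i * w t i) + eps ^+ 2 * (2^-1 * sqnorm (w t))).
  by move=> t; rewrite /v sq_exp; field.
rewrite (@eq_Rintegral _ _ _ mu _ (fun t => 2^-1 * sqnorm (u t) +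
    (eps * (\sum_(i < d) u t i * w t i) + eps ^+ 2 * (2^-1 * sqnorm (w t)))) (fun t => 2^-1 * sqnorm (v t))); last first.
  by move=> t _; exact: pw.
have wu : {within `[0, T], continuous (fun t => 2^-1 * sqnorm (u t))}.
  by apply: wcM; [exact: wcc | exact: wc_sqnorm].
have ww : {within `[0, T], continuous (fun t => 2^-1 * sqnorm (w t))}.
  by apply: wcM; [exact: wcc | exact: wc_sqnorm].
have wuw : {within `[0, T], continuous (fun t => \sum_(i < d) u t i * w t i)}.
  by apply: wcsum => i; apply: wcM.
rewrite RintegralD //; last first.
  apply: wc_int; apply: wcD; (apply: wcM; [exact: wcc|]) => //.
  exact: wc_int.
rewrite RintegralD //; [|apply: wc_int; apply: wcM => //; exact: wcc..].
rewrite RintegralZl //; last exact: wc_int.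
rewrite RintegralZl //; last exact: wc_int.
have -> : (fun i => y T i - xT i) = (fun i => (x T i - xT i) + eps * z T i).
  by apply/funext => i; rewrite /y; ring.
rewrite sq_exp.
move=> H; rewrite -subr_ge0 in H; apply: (le_trans H).
by rewrite le_eqVlt; apply/orP; left; apply/eqP; field.
Qed.

End FOC.
Section Struct.
Context {R : realType} {d : nat}.
Notation mu := (@lebesgue_measure R).

Definition psi (f g : R -> R) (T s : R) : R := expR (Fi f T - Fi f s) * g s.

Lemma psi_wc (T : R) (f g : R -> R) : 0 < T -> {within `[0, T], continuous f} ->
  {within `[0, T], continuous g} -> {within `[0, T], continuous (psi f g T)}.
Proof.
move=> T0 hf hg; apply: wcM => //; apply: wcexp; apply: wcD; first exact: wcc.
by apply: wcN; apply: Fi_wc => //; exact: ltW.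
Qed.

Lemma structure (T gam : R) (f h g : R -> R) (m x0 xT : 'I_d -> R)
    (u x : R -> 'I_d -> R) :
  0 < T -> {within `[0, T], continuous f} -> {within `[0, T], continuous g} ->
  optimal T gam f h g m x0 xT u x ->
  forall t, t \in `[0, T] -> forall i,
    u t i = - (gam * (x T i - xT i)) * psi f g T t.
Proof.
move=> T0 hf hg opt.
have hu : admissible T u by case: opt.
set p := fun i => gam * (x T i - xT i).
set w := fun t i => u t i + p i * psi f g T t.
have hpsi := psi_wc T0 hf hg.
have hw : admissible T w.
  by move=> i; apply: wcD; [exact: hu | apply: wcM => //; exact: wcc].
have [z0 zcont zder zT] := construct T0 hf hg hw.
have F := foc T0 opt hw z0 zcont zder.
have E2 : gam * \sum_(i < d) (x T i - xT i) * zc f g w T i =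
    \int[mu]_(s in `[0, T]) (\sum_(i < d) p i * (psi f g T s * w s i)).
  rewrite Rint_sum; last first.
    by move=> i; apply: wcM; [exact: wcc | apply: wcM].
  rewrite mulr_sumr; apply: eq_bigr => i _.
  rewrite zT RintegralZl //; last by apply: wc_int; apply: wcM.
  by rewrite /p /psi; ring.
have F2 : \int[mu]_(s in `[0, T])
     (\sum_(i < d) u s i * w s i + \sum_(i < d) p i * (psi f g T s * w s i)) = 0.
  rewrite RintegralD //; first by rewrite -E2.
  - by apply: wc_int; apply: wcsum => i; apply: wcM.
  - by apply: wc_int; apply: wcsum => i; apply: wcM; [exact: wcc | apply: wcM].
have E3 : \int[mu]_(s in `[0, T])
     (\sum_(i < d) u s i * w s i + \sum_(i < d) p i * (psi f g T s * w s i)) =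
   \int[mu]_(s in `[0, T]) sqnorm (w s).
  apply: eq_Rintegral => s _; rewrite /sqnorm -big_split /=.
  by apply: eq_bigr => i _; rewrite /w; ring.
rewrite E3 in F2.
have Z := ZL T0 (wc_sqnorm hw) (fun t _ => sumr_ge0 _ (fun i _ => sqr_ge0 (w t i))) F2.
move=> t tI i.
have := Z t tI; rewrite /sqnorm => /psumr_eq0P H.
have := H (fun j _ => sqr_ge0 (w t j)) i isT.
move/eqP; rewrite sqrf_eq0 /w => /eqP Hw.
by rewrite -/(p i); lra.
Qed.

End Struct.
Unset Implicit Arguments.
Set Strict Implicit.

Theorem proposition4p3 (R : realType) (d : nat) (T : R) (f h g : R -> R)
    (m x0 xT : 'I_d -> R)
    (ustar xstar : R -> R -> 'I_d -> R) (uinf : R -> 'I_d -> R) (L : R) :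
  0 < T ->
  {within `[0, T], continuous f} ->
  {within `[0, T], continuous h} ->
  {within `[0, T], continuous g} ->
  (exists t, t \in `[0, T] /\ g t != 0) ->
  (forall gam, 0 < gam -> optimal T gam f h g m x0 xT (ustar gam) (xstar gam)) ->
  (forall t, t \in `[0, T] -> forall i,
     (fun gam => ustar gam t i) @ +oo --> uinf t i) ->
  (fun gam => gam / 2 * sqnorm (fun i => xstar gam T i - xT i)) @ +oo --> L ->
  forall gam, 0 < gam ->
    (Jcost T gam xT (ustar gam) (xstar gam)
      <= \int[lebesgue_measure]_(t in [set` `[0, T]%R]) (2^-1 * sqnorm (uinf t))%:E + L%:E)%E.
Proof.
move=> T0 hf hh hg [t0 [t0I gt0]] Hopt Hu HL gam gam0.
set P := fun (c : R) i => c * (xstar c T i - xT i).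
set ps := psi f g T.
have hps : {within `[0, T], continuous ps} by exact: psi_wc.
have St : forall c, 0 < c -> forall t, t \in `[0, T] -> forall i,
    ustar c t i = - P c i * ps t.
  by move=> c c0; exact: (structure T0 hf hg (Hopt c c0)).
have ps0 : ps t0 != 0 by rewrite /ps /psi mulf_neq0 // gt_eqF // expR_gt0.
set q := fun i => - uinf t0 i / ps t0.
have Pcv : forall i, P c i @[c --> +oo] --> q i.
  move=> i.
  have e : \forall c \near +oo, - ustar c t0 i / ps t0 = P c i.
    near=> c.
    have c0 : 0 < c by near: c; apply: nbhs_pinfty_gt; rewrite num_real.
    by rewrite St //; field.
  apply: cvg_trans (near_eq_cvg e) _.
  apply: cvgM; last exact: cvg_cst.
  by apply: cvgN; exact: Hu.
have Uinf : forall t, t \in `[0, T] -> forall i, uinf t i = - q i * ps t.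
  move=> t tI i.
  have e : \forall c \near +oo, - P c i * ps t = ustar c t i.
    near=> c.
    have c0 : 0 < c by near: c; apply: nbhs_pinfty_gt; rewrite num_real.
    by rewrite St.
  have B : ustar^~ t ^~ i @ +oo --> - q i * ps t.
    apply: cvg_trans (near_eq_cvg e) _.
    apply: cvgM; last exact: cvg_cst.
    by apply: cvgN; exact: Pcv.
  exact: (cvg_unique _ (Hu t tI i) B).
have hadm : forall c, 0 < c -> admissible T (ustar c).
  by move=> c c0; case: (Hopt c c0).
have hsol : forall c, 0 < c -> solves T f h g m x0 (ustar c) (xstar c).
  by move=> c c0; case: (Hopt c c0) => _ [].
set K := \int[lebesgue_measure]_(s in `[0, T]) (ps s ^+ 2).
have hps2 : {within `[0, T], continuous (fun s => ps s ^+ 2)} by apply: wcM.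
have Jc : forall c, 0 < c ->
    \int[lebesgue_measure]_(s in `[0, T]) (2^-1 * sqnorm (ustar c s)) =
    2^-1 * sqnorm (P c) * K.
  move=> c c0; rewrite /K -RintegralZl //; last exact: wc_int.
  apply: eq_Rintegral => s sI.
  have sI' : s \in `[0, T] by move: sI; rewrite inE.
  rewrite /sqnorm mulr_sumr -mulrA mulr_suml mulr_sumr; apply: eq_bigr => i _.
  by rewrite St //; ring.
have Ji : (\int[lebesgue_measure]_(t in [set` `[0, T]%R]) (2^-1 * sqnorm (uinf t))%:E =
    (2^-1 * sqnorm q * K)%:E)%E.
  transitivity (\int[lebesgue_measure]_(s in [set` `[0, T]%R]) (2^-1 * sqnorm q * ps s ^+ 2)%:E)%E.
    apply: eq_integral => s sI.
    have sI' : s \in `[0, T] by move: sI; rewrite inE.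
    congr EFin.
    rewrite /sqnorm mulr_sumr -mulrA mulr_suml mulr_sumr; apply: eq_bigr => i _.
    by rewrite Uinf //; ring.
  rewrite int_Rint; last by apply: wcM => //; exact: wcc.
  by rewrite RintegralZl //; exact: wc_int.
set S := fun c => sqnorm (fun i => xstar c T i - xT i).
set r := fun c => \int[lebesgue_measure]_(s in `[0, T]) (2^-1 * sqnorm (ustar c s)) + c / 2 * S c.
have rcv : r c @[c --> +oo] --> 2^-1 * sqnorm q * K + L.
  have e : \forall c \near +oo, 2^-1 * sqnorm (P c) * K + c / 2 * S c = r c.
    near=> c.
    have c0 : 0 < c by near: c; apply: nbhs_pinfty_gt; rewrite num_real.
    by rewrite /r Jc.
  apply: cvg_trans (near_eq_cvg e) _.
  apply: cvgD; last exact: HL.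
  apply: cvgM; last exact: cvg_cst.
  apply: cvgM; first exact: cvg_cst.
  rewrite /sqnorm.
  apply: (cvg_bigsum (f := fun i c => P c i ^+ 2)) => i.
  exact: cvgM (Pcv i) (Pcv i).
have mono : \forall c \near +oo,
    \int[lebesgue_measure]_(s in `[0, T]) (2^-1 * sqnorm (ustar gam s)) + gam / 2 * S gam <= r c.
  near=> c.
  have cg : gam <= c by near: c; apply: nbhs_pinfty_ge; rewrite num_real.
  have c0 : 0 < c by exact: lt_le_trans cg.
  have := proj2 (proj2 (Hopt gam gam0)) (ustar c) (xstar c) (hadm c c0) (hsol c c0).
  rewrite !Jreal; last 2 first; [exact: hadm|exact: hadm|].
  rewrite (@lee_fin R) => H1; apply: (le_trans H1).
  rewrite /r lerD2l ler_wpM2r //; first by rewrite /S /sqnorm sumr_ge0 // => i _; rewrite sqr_ge0.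
  by rewrite ler_pM2r // invr_gt0 ltr0n.
have := limr_ge (cvgP _ rcv) mono.
rewrite (cvg_lim _ rcv) // => Hfin.
rewrite Ji Jreal; last exact: hadm.
rewrite -(@EFinD R) (@lee_fin R).
by apply: Hfin; exact: _.
Unshelve. all: by end_near.
Qed.
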